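(* Let $G$ and $H$ be impartial games that are both $\mathcal{P}$-positions. Then the split sum $G \circ H$ is a $\mathcal{P}$-position.
   Context: All games are finite (short) impartial games under normal play (a player with no legal move loses). A game is identified with its set of options, written $\{g_1,\dots,g_k\}$; $\mathbf{E}$ denotes the game with no options. Two games are identical, $G\equiv H$, if they have the same set of options, recursively. A $\mathcal{P}$-position is a game whose options are all $\mathcal{N}$-positions (in particular $\mathbf{E}$ is a $\mathcal{P}$-position); an $\mathcal{N}$-position is a game having at least one option that is a $\mathcal{P}$-position. The split sum is defined recursively by: $G\circ H \equiv \mathbf{E}$ if $G\equiv \mathbf{E}$; $G\circ H\equiv G$ if $H\equiv\mathbf{E}$ (and $G\not\equiv\mathbf{E}$); otherwise $G\circ H \equiv \{G\circ h,\ g\circ H\}$ where $g$ ranges over the options of $G$ and $h$ over the options of $H$. *)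

(* Defs.v *)
From Stdlib Require Import List Bool.
Import ListNotations.

Inductive game : Type := Node : list game -> game.

Definition options (G : game) : list game := match G with Node gs => gs end.

Definition E : game := Node [].

Fixpoint isP (G : game) : bool :=
  match G with Node gs => forallb (fun g => negb (isP g)) gs end.

Definition isN (G : game) : bool := existsb isP (options G).

(* Split sum:  G o H = E if G = E;  = G if H = E (G <> E);
   otherwise {G o h, g o H}. *)
Fixpoint split (G : game) : game -> game :=
  match G with
  | Node gs =>
    fix splitG (H : game) : game :=
      match H with
      | Node hs =>
        match gs, hs with
        | [], _ => Node []
        | _, [] => Node gs
        | _, _ => Node (map splitG hs ++ map (fun g => split g H) gs)
        end
      end
  end.

(* Main.v *)
Require Import Defs.
From Stdlib Require Import List Bool Lia.
Import ListNotations.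

Fixpoint gsize (G : game) : nat :=
  match G with Node gs => S (list_sum (map gsize gs)) end.

Lemma gsize_in g gs : In g gs -> gsize g < gsize (Node gs).
Proof.
  induction gs as [|a gs IH]; simpl; [tauto|].
  intros [->|H]; [lia|]. specialize (IH H). simpl in IH. lia.
Qed.

Lemma isP_false l : isP (Node l) = false <-> exists x, In x l /\ isP x = true.
Proof.
  change (isP (Node l)) with (forallb (fun g => negb (isP g)) l).
  split.
  - intro Hf. destruct (forallb (fun g => negb (isP g)) l) eqn:E'; [discriminate|].
    apply not_true_iff_false in E'. rewrite forallb_forall in E'.
    destruct (existsb isP l) eqn:Ex.
    + apply existsb_exists in Ex. exact Ex.
    + exfalso; apply E'. intros x Hx. destruct (isP x) eqn:Hp; [|reflexivity].
      assert (existsb isP l = true) by (apply existsb_exists; eauto). congruence.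
  - intros [x [Hx Hp]]. apply not_true_iff_false. rewrite forallb_forall.
    intro Hall. specialize (Hall x Hx). rewrite Hp in Hall. discriminate.
Qed.

Lemma isP_true l : isP (Node l) = true -> forall x, In x l -> isP x = false.
Proof.
  change (isP (Node l)) with (forallb (fun g => negb (isP g)) l).
  rewrite forallb_forall. intros Hall x Hx. specialize (Hall x Hx).
  destruct (isP x); auto.
Qed.

Lemma split_eq g gs h hs :
  Defs.split (Node (g :: gs)) (Node (h :: hs)) =
  Node (map (Defs.split (Node (g::gs))) (h :: hs) ++
        map (fun x => Defs.split x (Node (h::hs))) (g :: gs)).
Proof. reflexivity. Qed.

Lemma main n : forall G H, gsize G + gsize H <= n -> isP G = true -> isP H = true ->
  isP (Defs.split G H) = true.
Proof.
  induction n as [|n IH]; intros [gs] [hs] Hs HG HH.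
  { simpl in Hs. lia. }
  destruct gs as [|g gs]; [reflexivity|].
  destruct hs as [|h hs]; [exact HG|].
  rewrite split_eq.
  change (isP (Node ?l)) with (forallb (fun g => negb (isP g)) l).
  apply forallb_forall. intros x Hx. apply negb_true_iff.
  apply in_app_or in Hx. destruct Hx as [Hx|Hx]; apply in_map_iff in Hx;
    destruct Hx as [y [<- Hy]].
  - pose proof (isP_true _ HH y Hy) as Hy'. destruct y as [ys].
    apply isP_false in Hy'. destruct Hy' as [y' [Hy'in Hy'P]].
    destruct ys as [|y0 ys]; [destruct Hy'in|].
    rewrite split_eq. apply isP_false. exists (Defs.split (Node (g::gs)) y').
    split.
    + apply in_or_app; left. apply in_map. exact Hy'in.
    + apply IH; auto.
      pose proof (gsize_in _ _ Hy). pose proof (gsize_in _ _ Hy'in). lia.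
  - pose proof (isP_true _ HG y Hy) as Hy'. destruct y as [ys].
    apply isP_false in Hy'. destruct Hy' as [y' [Hy'in Hy'P]].
    destruct ys as [|y0 ys]; [destruct Hy'in|].
    rewrite split_eq. apply isP_false. exists (Defs.split y' (Node (h::hs))).
    split.
    + apply in_or_app; right. apply (in_map (fun x => Defs.split x (Node (h::hs)))). exact Hy'in.
    + apply IH; auto.
      pose proof (gsize_in _ _ Hy). pose proof (gsize_in _ _ Hy'in). lia.
Qed.

Theorem theorem2p2 (G H : game) :
  isP G = true -> isP H = true -> isP (Defs.split G H) = true.
Proof.
  intros. apply (main (gsize G + gsize H)); auto.
Qed.
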